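(* In the algebraic decision tree model, any algorithm that finds the elimination order of a set of $n$ growing disks in the plane, or of a set of $n$ growing squares in the plane, requires $\Omega(n\log n)$ time.
   Context: Growing prioritized disks: centers $p_1,\dots,p_n\in\mathbb{R}^2$ and growth rates $v_1,\dots,v_n>0$; at time $t\ge0$ disk $D_i$ is centered at $p_i$ with radius $tv_i$ (for squares: the axis-aligned square centered at $p_i$ with edge length $2v_it$). Smaller index means higher priority; $t(i,j)$ is the time at which objects $i$ and $j$ would first touch (for disks $|p_ip_j|/(v_i+v_j)$). Whenever objects $i<j$ touch at time $t(i,j)$ and neither has been removed before, object $j$ is removed at that time and object $i$ keeps growing. The elimination order is the sequence of objects sorted by the times at which they are removed (object $1$ is never removed). *)

(* Defs.v *)
From mathcomp Require Import all_boot all_order all_algebra.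
From mathcomp Require Import reals.
From mathcomp Require Import mpoly.
Import Order.TTheory GRing.Theory Num.Theory.

Set Implicit Arguments.
Unset Strict Implicit.
Unset Printing Implicit Defensive.

Local Open Scope ring_scope.

Section Elimination.
Variable R : realType.

(* Removal times live in R extended by +oo, encoded as option R (None = +oo,
   i.e. "never removed"). *)
Definition le_ext (a b : option R) : bool :=
  match a, b with
  | _, None => true
  | None, Some _ => false
  | Some x, Some y => x <= y
  end.

Definition min_ext (a b : option R) : option R :=
  if le_ext a b then a else b.

(* Objects are indexed 0,1,...,n-1; smaller index = higher priority.
   [t i j] is the time at which objects i and j would first touch.
   Given the removal times [s] of objects 0..j-1, object j is removed at the
   earliest time t(i,j) with i < j such that i has not been removed before
   t(i,j) (i.e. removal time of i >= t(i,j)); if there is none, never. *)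
Definition next_removal (t : nat -> nat -> R) (s : seq (option R)) (j : nat)
  : option R :=
  foldr (fun i acc =>
           if le_ext (Some (t i j)) (nth None s i)
           then min_ext (Some (t i j)) acc else acc)
        None (iota 0 j).

Fixpoint removal_times (t : nat -> nat -> R) (k : nat) : seq (option R) :=
  match k with
  | 0 => [::]
  | k'.+1 => let s := removal_times t k' in rcons s (next_removal t s k')
  end.

Definition removal_time (t : nat -> nat -> R) (n j : nat) : option R :=
  nth None (removal_times t n) j.

(* [s] is an elimination order of the n objects: the sequence of all removed
   objects, sorted by (nondecreasing) removal time; in case of ties any
   consistent order is accepted. *)
Definition is_elim_order (t : nat -> nat -> R) (n : nat) (s : seq nat) : bool :=
  perm_eq s [seq j <- iota 0 n | removal_time t n j != None] &&
  sorted (fun a b => le_ext (removal_time t n a) (removal_time t n b)) s.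

Definition coord (m : nat) (x : 'I_m -> R) (k : nat) : R :=
  match @insub nat (fun k => k < m)%N _ k with
  | Some i => x i
  | None => 0
  end.

Definition cx (n : nat) (x : 'I_(3 * n) -> R) (i : nat) : R := coord x (3 * i).
Definition cy (n : nat) (x : 'I_(3 * n) -> R) (i : nat) : R := coord x (3 * i + 1).
Definition rate (n : nat) (x : 'I_(3 * n) -> R) (i : nat) : R := coord x (3 * i + 2).

Definition disk_touch (n : nat) (x : 'I_(3 * n) -> R) (i j : nat) : R :=
  Num.sqrt ((cx x i - cx x j) ^+ 2 + (cy x i - cy x j) ^+ 2)
  / (rate x i + rate x j).

(* axis-aligned squares of edge 2 v_i t: touch when the L_infinity distance
   equals (v_i + v_j) t *)
Definition square_touch (n : nat) (x : 'I_(3 * n) -> R) (i j : nat) : R :=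
  Num.max `|cx x i - cx x j| `|cy x i - cy x j| / (rate x i + rate x j).

Inductive adt (m : nat) (O : Type) : Type :=
  | ALeaf of O
  | ANode of {mpoly R[m]} & adt m O & adt m O & adt m O.

Fixpoint adt_run (m : nat) (O : Type) (T : adt m O) (x : 'I_m -> R) : O :=
  match T with
  | ALeaf o => o
  | ANode p Tlt Teq Tgt =>
      let y := p.@[x] in
      if y < 0 then adt_run Tlt x
      else if y == 0 then adt_run Teq x
      else adt_run Tgt x
  end.

Fixpoint adt_depth (m : nat) (O : Type) (T : adt m O) : nat :=
  match T with
  | ALeaf _ => 0
  | ANode _ Tlt Teq Tgt =>
      (maxn (adt_depth Tlt) (maxn (adt_depth Teq) (adt_depth Tgt))).+1
  end.

(* all test polynomials have total degree at most d *)
Fixpoint adt_deg_le (m : nat) (O : Type) (d : nat) (T : adt m O) : bool :=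
  match T with
  | ALeaf _ => true
  | ANode p Tlt Teq Tgt =>
      [&& (msize p <= d.+1)%N, adt_deg_le d Tlt, adt_deg_le d Teq
        & adt_deg_le d Tgt]
  end.

Definition computes_elim_order (n : nat)
    (touch : ('I_(3 * n) -> R) -> nat -> nat -> R)
    (T : adt (3 * n) (seq nat)) : Prop :=
  forall x : 'I_(3 * n) -> R,
    (forall i, (i < n)%N -> 0 < rate x i) ->
    is_elim_order (touch x) n (adt_run T x).

Definition elim_order_lower_bound
    (touch : forall n : nat, ('I_(3 * n) -> R) -> nat -> nat -> R) : Prop :=
  forall d : nat,
  exists2 c : R, 0 < c &
  exists N : nat, forall n : nat, (N <= n)%N ->
    forall T : adt (3 * n) (seq nat),
      adt_deg_le d T -> computes_elim_order (@touch n) T ->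
      c * ((n * trunc_log 2 n)%N)%:R <= (adt_depth T)%:R.

End Elimination.

(* Main.v *)
Require Import Defs.
From mathcomp Require Import all_boot all_order all_algebra.
From mathcomp Require Import reals.
From mathcomp Require Import mpoly.
From mathcomp Require Import zify ring.
Import Order.TTheory GRing.Theory Num.Theory.
Lemma fact_sq_ge (m : nat) : (m ^ m <= (m`!) ^ 2)%N.
Proof.
rewrite fact_prod expnS expn1.
have E : (\prod_(1 <= i < m.+1) i = \prod_(1 <= i < m.+1) (m.+1 - i))%N.
  rewrite big_nat_rev /=. apply: eq_big_nat => i /andP[h1 h2]. lia.
rewrite {2}E -big_split /=.
have -> : (m ^ m = \prod_(1 <= i < m.+1) m)%N by rewrite prod_nat_const_nat subn1.
rewrite big_seq [X in (_ <= X)%N]big_seq.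
apply: leq_prod => i; rewrite mem_index_iota => /andP[h1 h2].
nia.
Qed.

Fixpoint leaves (R : realType) (m : nat) (O : Type) (T : adt R m O) : seq O :=
  match T with
  | ALeaf o => [:: o]
  | @ANode _ _ _ _ a b c => leaves _ _ _ a ++ leaves _ _ _ b ++ leaves _ _ _ c
  end.
Arguments leaves {R m O} T.

Lemma size_leaves (R : realType) (m : nat) (O : Type) (T : adt R m O) :
  (size (leaves T) <= 3 ^ adt_depth T)%N.
Proof.
elim: T => [o|p a iha b ihb c ihc] //=.
rewrite !size_cat expnS.
set M := maxn _ _.
have ha : (3 ^ adt_depth a <= 3 ^ M)%N by apply: leq_pexp2l => //; rewrite /M; lia.
have hb : (3 ^ adt_depth b <= 3 ^ M)%N by apply: leq_pexp2l => //; rewrite /M; lia.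
have hc : (3 ^ adt_depth c <= 3 ^ M)%N by apply: leq_pexp2l => //; rewrite /M; lia.
lia.
Qed.

Lemma run_in_leaves (R : realType) (m : nat) (O : eqType) (T : adt R m O) x :
  adt_run T x \in leaves T.
Proof.
elim: T => [o|p a iha b ihb c ihc] /=; first by rewrite inE.
case: ifP => _; first by rewrite mem_cat iha.
case: ifP => _; by rewrite !mem_cat ?iha ?ihb ?ihc ?orbT.
Qed.

Local Open Scope ring_scope.

Section Main.
Variable R : realType.

Definition gin (n : nat) (s : seq nat) (k : nat) : R :=
  let i := (k %/ 3)%N in
  if (k %% 3 == 0)%N then (if i == 0%N then 0 else (index i s).+1%:R)
  else if (k %% 3 == 1)%N then 0
  else (if i == 0%N then 1 else (n.*2)%:R^-1).

Definition xin (n : nat) (s : seq nat) : 'I_(3 * n) -> R :=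
  fun k => gin n s (val k).

Lemma coordE (m : nat) (g : nat -> R) k : (k < m)%N ->
  Defs.coord (fun i : 'I_m => g (val i)) k = g k.
Proof. move=> h; rewrite /Defs.coord; case: insubP => [u _ ->|] /=; [by [] | by rewrite h]. Qed.

Definition Pos (s : seq nat) (i : nat) : R :=
  if i == 0%N then 0 else (index i s).+1%:R.
Definition Vel (n : nat) (i : nat) : R :=
  if i == 0%N then 1 else (n.*2)%:R^-1.

Lemma cxE n s i : (i < n)%N -> cx (xin n s) i = Pos s i.
Proof.
move=> h; rewrite /cx /xin coordE; last lia.
rewrite /gin /Pos.
have -> : (3 * i %% 3 = 0)%N by lia.
have -> : (3 * i %/ 3 = i)%N by lia.
done.
Qed.

Lemma cyE n s i : (i < n)%N -> cy (xin n s) i = 0.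
Proof.
move=> h; rewrite /cy /xin coordE; last lia.
rewrite /gin.
have -> : ((3 * i + 1) %% 3 = 1)%N by lia.
done.
Qed.

Lemma rateE n s i : (i < n)%N -> rate (xin n s) i = Vel n i.
Proof.
move=> h; rewrite /rate /xin coordE; last lia.
rewrite /gin /Vel.
have -> : ((3 * i + 2) %% 3 = 2)%N by lia.
have -> : ((3 * i + 2) %/ 3 = i)%N by lia.
done.
Qed.

Lemma Vel_gt0 n i : (0 < n)%N -> 0 < Vel n i.
Proof.
move=> h; rewrite /Vel; case: ifP => _ //.
by rewrite invr_gt0 ltr0n; lia.
Qed.

Lemma foldr_ge (t : nat -> nat -> R) (s : seq (option R)) (k : nat) (L : seq nat) :
  (forall i, i \in L -> t 0%N k <= t i k) ->
  le_ext (Some (t 0%N k))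
    (foldr (fun i acc =>
           if le_ext (Some (t i k)) (nth None s i)
           then min_ext (Some (t i k)) acc else acc) None L).
Proof.
elim: L => [|a L IH] H //=.
have IH' : le_ext (Some (t 0%N k)) (foldr (fun i acc =>
           if le_ext (Some (t i k)) (nth None s i)
           then min_ext (Some (t i k)) acc else acc) None L).
  by apply: IH => i hi; apply: H; rewrite inE hi orbT.
case: ifP => _ //.
rewrite /min_ext; case: ifP => _ //=.
by apply: H; rewrite inE eqxx.
Qed.

Lemma foldr_cons1 (T U : Type) (f : T -> U -> U) z x s :
  foldr f z (x :: s) = f x (foldr f z s).
Proof. by []. Qed.

Definition ftime (t : nat -> nat -> R) (j : nat) : option R :=
  if j == 0%N then None else Some (t 0%N j).

Lemma removal_timesE (t : nat -> nat -> R) (n : nat) :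
  (forall i j, (0 < i)%N -> (i < j)%N -> (j < n)%N -> t 0%N j <= t i j) ->
  forall k, (k <= n)%N -> removal_times t k = map (ftime t) (iota 0 k).
Proof.
move=> Hij; elim=> [|k IH] hk //.
rewrite [removal_times _ _]/=.
rewrite IH; last lia.
rewrite -addn1 iotaD add0n map_cat /= cats1; congr rcons.
rewrite /next_removal.
case: k IH hk => [|k] IH hk; first by [].
set s := map (ftime t) (iota 0 k.+1).
have H := @foldr_ge t s k.+1 (iota 1 k).
have -> : iota 0 k.+1 = 0%N :: iota 1 k by [].
rewrite foldr_cons1.
have -> : nth None s 0 = None by [].
have -> : le_ext (Some (t 0%N k.+1)) None = true by [].
rewrite /min_ext H //.
move=> i; rewrite mem_iota => hi; apply: Hij; lia.
Qed.

Lemma removal_timeE (t : nat -> nat -> R) (n : nat) :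
  (forall i j, (0 < i)%N -> (i < j)%N -> (j < n)%N -> t 0%N j <= t i j) ->
  forall j, (j < n)%N -> removal_time t n j = ftime t j.
Proof.
move=> Hij j hj; rewrite /removal_time (@removal_timesE t n Hij n (leqnn n)).
by rewrite (nth_map 0%N) ?size_iota // nth_iota.
Qed.


Lemma dist1 (p q : nat) : p != q -> 1 <= `|p%:R - q%:R : R|.
Proof.
move=> pq; case: (ltngtP p q) => h.
- by rewrite distrC -natrB ?(ltnW h) // normr_nat ler1n subn_gt0.
- by rewrite -natrB ?(ltnW h) // normr_nat ler1n subn_gt0.
- by rewrite h eqxx in pq.
Qed.

Definition Tt (n : nat) (s : seq nat) (i j : nat) : R :=
  `|Pos s i - Pos s j| / (Vel n i + Vel n j).

Lemma T0E n s j : (0 < j)%N ->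
  Tt n s 0 j = (index j s).+1%:R / (1 + (n.*2)%:R^-1).
Proof.
move=> hj; rewrite /Tt /Pos /Vel eqxx.
have -> : (j == 0%N) = false by lia.
by rewrite sub0r normrN normr_nat.
Qed.

Lemma Hij_conc n s (hs : perm_eq s (iota 1 n)) i j :
  (0 < i)%N -> (i < j)%N -> (j < n.+1)%N -> Tt n.+1 s 0 j <= Tt n.+1 s i j.
Proof.
move=> hi hij hj.
have mem k : (k \in s) = (0 < k < n.+1)%N.
  by rewrite (perm_mem hs) mem_iota; apply/idP/idP; lia.
have szs : size s = n by rewrite (perm_size hs) size_iota.
have js : j \in s by rewrite mem; lia.
have is_ : i \in s by rewrite mem; lia.
have ijd : index i s != index j s.
  apply/eqP => E.
  have : nth 0%N s (index i s) = nth 0%N s (index j s) by rewrite E.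
  rewrite !nth_index //; lia.
have hjn : ((index j s).+1 <= n)%N by rewrite -szs index_mem.
have e0 : 0 <= ((n.+1).*2)%:R^-1 :> R by rewrite invr_ge0.
rewrite T0E; last lia.
apply: (@le_trans _ _ (n%:R)).
  rewrite ler_pdivrMr; last by apply: (lt_le_trans ltr01); rewrite lerDl.
  apply: (@le_trans _ _ (n%:R)); first by rewrite ler_nat.
  by rewrite ler_peMr // lerDl.
rewrite /Tt /Pos /Vel.
have -> : (i == 0%N) = false by lia.
have -> : (j == 0%N) = false by lia.
have -> : ((n.+1).*2)%:R^-1 + ((n.+1).*2)%:R^-1 = (n.+1)%:R^-1 :> R.
  have -> : ((n.+1).*2)%:R = 2 * (n.+1)%:R :> R by rewrite -muln2 natrM mulrC.
  have h1 : (n.+1)%:R != 0 :> R by rewrite pnatr_eq0.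
  by field; rewrite addrC natr1 pnatr_eq0.
rewrite invrK.
apply: (@le_trans _ _ (n.+1)%:R); first by rewrite ler_nat.
rewrite ler_peMl //.
by apply: dist1; rewrite eqSS.
Qed.


Lemma out_unique (t : nat -> nat -> R) n s (hs : perm_eq s (iota 1 n))
  (Ht : forall i j, (i < n.+1)%N -> (j < n.+1)%N -> t i j = Tt n.+1 s i j)
  o : is_elim_order t n.+1 o -> o = s.
Proof.
have Hij : forall i j, (0 < i)%N -> (i < j)%N -> (j < n.+1)%N -> t 0%N j <= t i j.
  move=> i j hi hij hj; rewrite !Ht //; last lia.
  exact: Hij_conc.
have rtE := @removal_timeE t n.+1 Hij.
have us : uniq s by rewrite (perm_uniq hs) iota_uniq.
have mem k : (k \in s) = (0 < k < n.+1)%N.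
  by rewrite (perm_mem hs) mem_iota; apply/idP/idP; lia.
case/andP => hp hsort.
have F : [seq j <- iota 0 n.+1 | removal_time t n.+1 j != None] = iota 1 n.
  have -> : iota 0 n.+1 = 0%N :: iota 1 n by [].
  rewrite /= rtE //= -[RHS]filter_predT.
  apply: eq_in_filter => j; rewrite mem_iota => hj.
  rewrite rtE; last lia.
  by rewrite /ftime; have -> : (j == 0%N) = false by lia.
rewrite F in hp.
have pos : perm_eq o s by apply: (perm_trans hp); rewrite perm_sym.
have memo k : (k \in o) = (0 < k < n.+1)%N by rewrite (perm_mem pos) mem.
pose leI := fun a b => (index a s <= index b s)%N.
have so : sorted leI o.
  move: hsort; rewrite (@eq_in_sorted _ (fun x => x \in o) _ leI) //.
  move=> a b; rewrite !memo => ha hb.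
  rewrite !rtE; try lia.
  rewrite /ftime; have -> : (a == 0%N) = false by lia.
  have -> : (b == 0%N) = false by lia.
  rewrite /= !Ht; try lia.
  rewrite !T0E; try lia.
  rewrite ler_pM2r ?ler_nat //.
  rewrite invr_gt0; apply: (lt_le_trans ltr01); rewrite lerDl invr_ge0 //.
have ss : sorted leI s.
  rewrite /leI -(sorted_map (f := index^~ s) (e' := leq)).
  have -> : map (index^~ s) s = iota 0 (size s).
    transitivity (map (index^~ s) (mkseq (nth 0%N s) (size s))); first by rewrite mkseq_nth.
    rewrite /mkseq -map_comp -[RHS]map_id; apply/eq_in_map => i; rewrite mem_iota => hi /=.
    by rewrite index_uniq.
  exact: iota_sorted.
apply: (sorted_eq_in _ _ so ss pos).
- by move=> a b c _ _ _; apply: leq_trans.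
- move=> a b ha hb /andP[h1 h2].
  have E : index a s = index b s by apply/eqP; rewrite eqn_leq; apply/andP.
  have ha' : a \in s by rewrite -(perm_mem pos).
  have hb' : b \in s by rewrite -(perm_mem pos).
  by rewrite -(nth_index 0%N ha') E nth_index.
Qed.


Lemma arith (n k h : nat) : (7 <= n)%N -> (3 <= k)%N -> (2 ^ k <= n.+1)%N ->
  (n`! <= 3 ^ h)%N -> (n.+1 * k <= 8 * h)%N.
Proof.
move=> hn hk h2 hf.
have e1 : (2 ^ k.-1 <= n)%N.
  move: h2; have -> : k = k.-1.+1 by lia.
  rewrite expnS /=; set X := (2 ^ k.-1)%N; lia.
have e2 : (2 ^ (k.-1 * n) <= n ^ n)%N by rewrite expnM leq_exp2r //; lia.
have e3 := fact_sq_ge n.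
have e4 : ((n`!) ^ 2 <= (3 ^ h) ^ 2)%N by rewrite leq_sqr.
have e5 : ((3 ^ h) ^ 2 <= 2 ^ (4 * h))%N.
  rewrite [(4 * h)%N]mulnC expnM.
  have h3 : (3 ^ h <= 2 ^ h * 2 ^ h)%N.
    by rewrite -expnMn; case: h {hf e4} => [|h] //; rewrite leq_exp2r.
  have := leq_mul h3 h3.
  rewrite !expnS !expn0 !muln1; set X := (2 ^ h)%N; set Y := (3 ^ h)%N; nia.
have e6 : (k.-1 * n <= 4 * h)%N.
  rewrite -(@leq_exp2l 2%N) //.
  apply: (leq_trans e2); apply: (leq_trans e3); apply: (leq_trans e4); exact: e5.
nia.
Qed.

Lemma lb_generic (touch : forall n : nat, ('I_(3 * n) -> R) -> nat -> nat -> R)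
  (Htouch : forall n (x : 'I_(3 * n) -> R) i j, cy x i = 0 -> cy x j = 0 ->
     touch n x i j = `|cx x i - cx x j| / (rate x i + rate x j)) :
  elim_order_lower_bound touch.
Proof.
move=> d; exists (8%:R^-1); first by rewrite invr_gt0 ltr0n.
exists 8%N => N hN T _ HT.
case: N hN T HT => [|n] // hN T HT.
have key : forall s, perm_eq s (iota 1 n) -> adt_run T (xin n.+1 s) = s.
  move=> s hs; apply: (@out_unique _ n s hs); last first.
    apply: HT => i hi; rewrite rateE //; exact: Vel_gt0.
  move=> i j hi hj; rewrite Htouch ?cyE // !cxE // !rateE //.
have sub : {subset permutations (iota 1 n) <= leaves T}.
  move=> s; rewrite mem_permutations => hs; rewrite -(key s hs); exact: run_in_leaves.
have := uniq_leq_size (permutations_uniq _) sub.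
rewrite size_permutations ?iota_uniq // size_iota => hfact.
have hf := leq_trans hfact (@size_leaves _ _ _ T).
have hk : (3 <= trunc_log 2 n.+1)%N by apply: trunc_log_max.
have h2 : (2 ^ trunc_log 2 n.+1 <= n.+1)%N by apply: trunc_logP.
have h7 : (7 <= n)%N by lia.
have := @arith _ _ _ h7 hk h2 hf.
move=> H.
rewrite mulrC ler_pdivrMr ?ltr0n // -natrM ler_nat; lia.
Qed.

End Main.

Theorem theorem19 (R : realType) :
  elim_order_lower_bound (@disk_touch R) /\
  elim_order_lower_bound (@square_touch R).
Proof.
split; apply: lb_generic => n x i j hi hj.
- by rewrite /disk_touch hi hj subrr expr0n /= addr0 sqrtr_sqr.
- rewrite /square_touch hi hj subrr normr0.
  by rewrite max_l.
Qed.
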